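(* Let $n\ge1$ and $\Lambda\in\widetilde{\mathrm{NC}}^{\mathrm D}(n)$. Then $|\Lambda^+|=2n+2-|\Lambda|$ if $-1$ is the greatest element of its block in $\Lambda$, and $|\Lambda^+|=2n-|\Lambda|$ otherwise, where $|\cdot|$ denotes the number of blocks.
   Context: A set partition of a finite set $\mathcal X\subset\mathbb Z$ is a set of nonempty pairwise disjoint sets (blocks) with union $\mathcal X$. A pair $(i,j)$ is an arc of $\Lambda$ if $i<j$ lie in the same block and $j$ is the least element of that block greater than $i$; $\mathrm{Arc}(\Lambda)$ is the set of arcs. Let $[\pm n]=\{\pm1,\dots,\pm n\}$. $\Pi^{\mathrm D}(n)$ is the set of partitions $\Lambda$ of $[\pm n]$ such that $(i,j)\in\mathrm{Arc}(\Lambda)$ iff $(-j,-i)\in\mathrm{Arc}(\Lambda)$, and $\widetilde{\mathrm{NC}}^{\mathrm D}(n)$ is the set of $\Lambda\in\Pi^{\mathrm D}(n)$ such that whenever $(i,k),(j,l)\in\mathrm{Arc}(\Lambda)$ with $i<j<k<l$, we have $(i,k)=(-l,-j)$. For a partition $\Lambda$ of $\mathcal X$, $\Lambda^+$ is the partition of $\mathcal X$ with arc set $(\mathrm{Arc}(\Lambda)\setminus\mathcal S)\cup\mathcal T$, where $\mathcal S=\{(i,i+1):i\in\mathbb Z\}$ and $\mathcal T$ is the set of pairs $(i,i+1)\in\mathcal X\times\mathcal X$ with $i$ maximal in its block of $\Lambda$ and $i+1$ minimal in its block of $\Lambda$ (note $-1$ and $1$ are not of the form $i,i+1$). *)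

(* Defs.v *)
From HB Require Import structures.
From mathcomp Require Import all_boot all_order all_algebra.
From mathcomp Require Import finmap.
Set Implicit Arguments. Unset Strict Implicit. Unset Printing Implicit Defensive.
Import Order.TTheory GRing.Theory Num.Theory.
Local Open Scope ring_scope.
Local Open Scope fset_scope.

Definition spart := {fset {fset int}}.

Definition in_pm (n : nat) (x : int) : bool := (x != 0) && (`|x| <= n%:Z).

Definition is_partition (L : spart) (X : int -> bool) : Prop :=
  [/\ forall B, B \in L -> B != fset0,
      forall B C, B \in L -> C \in L -> B != C -> [disjoint B & C]
    & forall x, X x <-> exists2 B, B \in L & x \in B].

Definition is_arc (L : spart) (i j : int) : Prop :=
  exists2 B, B \in L &
    [/\ i \in B, j \in B, i < j & forall k, k \in B -> i < k -> j <= k].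

Definition is_block_max (L : spart) (i : int) : Prop :=
  exists2 B, B \in L & i \in B /\ (forall k, k \in B -> k <= i).
Definition is_block_min (L : spart) (i : int) : Prop :=
  exists2 B, B \in L & i \in B /\ (forall k, k \in B -> i <= k).

Definition in_PiD (n : nat) (L : spart) : Prop :=
  is_partition L (in_pm n) /\
  forall i j, is_arc L i j <-> is_arc L (- j) (- i).

Definition in_NCDt (n : nat) (L : spart) : Prop :=
  in_PiD n L /\
  forall i j k l, is_arc L i k -> is_arc L j l -> i < j -> j < k -> k < l ->
    (i, k) = (- l, - j).

(* The arc set of Lambda^+ : (Arc(L) \ S) u T, for L a partition of X. *)
Definition plus_arc (X : int -> bool) (L : spart) (i j : int) : Prop :=
  (is_arc L i j /\ j <> (i + 1)%R) \/
  [/\ j = (i + 1)%R, X i, X j, is_block_max L i & is_block_min L j].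

(* Main.v *)
Require Import Defs.
From HB Require Import structures.
From mathcomp Require Import all_boot all_order all_algebra.
From mathcomp Require Import finmap zify.
Import Order.TTheory GRing.Theory Num.Theory.
Local Open Scope fset_scope.
Local Open Scope ring_scope.
Set Implicit Arguments. Unset Strict Implicit. Unset Printing Implicit Defensive.

Lemma count_has_uniq (T : eqType) (p : pred T) (s : seq T) :
  uniq s -> {in s &, forall a b, p a -> p b -> a = b} -> count p s = has p s.
Proof.
elim: s => [//|a s IH] /= /andP[nas us] H.
rewrite IH //; last by move=> x y xs ys; apply: H; rewrite inE ?xs ?ys orbT.
case pa: (p a) => /=; last by [].
case hs: (has p s) => //.
move/hasP: hs => [y ys py].
have := H a y; rewrite inE eqxx inE ys orbT => /(_ isT isT pa py) ay.
by move: nas; rewrite ay ys.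
Qed.

Lemma ext_exists (r : rel int) (s : seq int) :
  (forall a b, r a b || r b a) -> transitive r -> s != [::] ->
  exists2 x, x \in s & all (r x) s.
Proof.
move=> tot tr; elim: s => [//|a s IH] _.
case: s IH => [|b s] IH.
  exists a; first by rewrite inE.
  by rewrite /= andbT; case/orP: (tot a a).
have [x xs ax] := IH isT.
case rax: (r a x).
  exists a; first by rewrite inE eqxx.
  have raa : r a a by case/orP: (tot a a).
  apply/allP => k; rewrite inE => /orP[/eqP->//|ks].
  exact: (tr _ _ _ rax (allP ax k ks)).
exists x; first by rewrite inE xs orbT.
apply/allP => k; rewrite inE => /orP[/eqP->|ks]; last exact: (allP ax).
by move: (tot a x); rewrite rax.
Qed.

Definition arcB (B : {fset int}) (i j : int) :=
  [/\ i \in B, j \in B, i < j & forall k, k \in B -> i < k -> j <= k].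

Definition bext (r : rel int) (Q : spart) (x : int) : bool :=
  has (fun B : {fset int} => (x \in B) && all (r x) B) Q.
Definition rmax : rel int := fun x k => k <= x.
Definition rmin : rel int := fun x k => x <= k.

Lemma bmaxP Q x : is_block_max Q x <-> bext rmax Q x.
Proof.
split.
  case=> B BQ [xB H]; apply/hasP; exists B => //; rewrite xB /=.
  by apply/allP => k kB; exact: H.
case/hasP => B BQ /andP[xB /allP H]; exists B => //; by split=> // k kB; exact: H.
Qed.

Lemma bminP Q x : is_block_min Q x <-> bext rmin Q x.
Proof.
split.
  case=> B BQ [xB H]; apply/hasP; exists B => //; rewrite xB /=.
  by apply/allP => k kB; exact: H.
case/hasP => B BQ /andP[xB /allP H]; exists B => //; by split=> // k kB; exact: H.
Qed.

Section Part.
Variables (Q : spart) (X : int -> bool).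
Hypothesis HQ : is_partition Q X.

Lemma blk_uniq B C x : B \in Q -> C \in Q -> x \in B -> x \in C -> B = C.
Proof.
case: HQ => _ Hd _ BQ CQ xB xC; apply/eqP; apply/negPn/negP => nBC.
by move/fdisjointP: (Hd _ _ BQ CQ nBC) => /(_ x xB); rewrite xC.
Qed.

Lemma blk_ex x : X x -> exists2 B, B \in Q & x \in B.
Proof. by case: HQ => _ _ H /H. Qed.

Lemma blk_sub B x : B \in Q -> x \in B -> X x.
Proof. by case: HQ => _ _ H BQ xB; apply/H; exists B. Qed.

Lemma bext_blk r B x : B \in Q -> x \in B -> bext r Q x = all (r x) B.
Proof.
move=> BQ xB; apply/hasP/idP.
  by case=> C CQ /andP[xC H]; rewrite (blk_uniq BQ CQ xB xC).
by move=> H; exists B => //; rewrite xB.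
Qed.

Lemma arc_blk B i j : B \in Q -> i \in B -> is_arc Q i j -> arcB B i j.
Proof.
move=> BQ iB [C CQ [iC jC ij H]]; rewrite (blk_uniq BQ CQ iB iC); by split.
Qed.

Lemma out_iff B x : B \in Q -> x \in B ->
  (exists j, is_arc Q x j) <-> has (fun k => x < k) B.
Proof.
move=> BQ xB; split.
  case=> j /(arc_blk BQ xB) [_ jB xj _]; apply/hasP; by exists j.
move=> hh.
have : [seq k <- (B : seq int) | x < k] != [::].
  by rewrite -size_eq0 size_filter -lt0n -has_count.
move/(@ext_exists rmin) => [].
- by move=> a b; rewrite /rmin le_total.
- by move=> a b c; apply: le_trans.
move=> m; rewrite mem_filter => /andP[xm mB] /allP H.
exists m; exists B => //; split=> // k kB xk.
by apply: H; rewrite mem_filter xk kB.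
Qed.

Lemma in_iff B x : B \in Q -> x \in B ->
  (exists i, is_arc Q i x) <-> has (fun k => k < x) B.
Proof.
move=> BQ xB; split.
  case=> i [C CQ [iC xC ix _]]; rewrite (blk_uniq BQ CQ xB xC).
  apply/hasP; by exists i.
move=> hh.
have : [seq k <- (B : seq int) | k < x] != [::].
  by rewrite -size_eq0 size_filter -lt0n -has_count.
move/(@ext_exists rmax) => [].
- by move=> a b; rewrite /rmax le_total.
- by move=> a b c /= h1 h2; apply: le_trans h2 h1.
move=> m; rewrite mem_filter => /andP[mx mB] /allP H.
exists m; exists B => //; split=> // k kB mk.
case: (ltP k x) => // kx.
have := H k; rewrite mem_filter kx kB => /(_ isT); rewrite /rmax.
by move=> km; have := lt_le_trans mk km; rewrite ltxx.
Qed.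

Lemma out_bmax x : X x -> (exists j, is_arc Q x j) <-> ~~ bext rmax Q x.
Proof.
move=> Xx; have [B BQ xB] := blk_ex Xx.
rewrite (out_iff BQ xB) (bext_blk _ BQ xB) -has_predC.
split=> /hasP[k kB h]; apply/hasP; exists k => //=.
  by rewrite /rmax -ltNge.
by move: h => /=; rewrite /rmax -ltNge.
Qed.

Lemma in_bmin x : X x -> (exists i, is_arc Q i x) <-> ~~ bext rmin Q x.
Proof.
move=> Xx; have [B BQ xB] := blk_ex Xx.
rewrite (in_iff BQ xB) (bext_blk _ BQ xB) -has_predC.
split=> /hasP[k kB h]; apply/hasP; exists k => //=.
  by rewrite /rmin -ltNge.
by move: h => /=; rewrite /rmin -ltNge.
Qed.

Lemma arc_fun i j j' : is_arc Q i j -> is_arc Q i j' -> j = j'.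
Proof.
move=> [B BQ [iB jB ij H]] /(arc_blk BQ iB) [_ j'B ij' H'].
by apply/le_anti; rewrite H' // H.
Qed.

Lemma arc_inj i i' j : is_arc Q i j -> is_arc Q i' j -> i = i'.
Proof.
move=> [B BQ [iB jB ij H]] [C CQ [i'C jC i'j H']].
have e := blk_uniq BQ CQ jB jC; subst C.
case: (ltgtP i i') => // h.
  by have := H _ i'C h; rewrite leNgt i'j.
by have := H' _ iB h; rewrite leNgt ij.
Qed.

Lemma arc_X i j : is_arc Q i j -> X i /\ X j.
Proof. by case=> B BQ [iB jB _ _]; split; apply: blk_sub BQ _. Qed.

End Part.

Lemma count_sum (T : Type) (p : pred T) (s : seq T) :
  count p s = (\sum_(x <- s) (p x : nat))%N.
Proof. by elim: s => [|a s IH]; rewrite ?big_nil ?big_cons //= IH. Qed.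

Lemma card_bext (r : rel int) (Q : spart) (X : int -> bool) (Xs : seq int) :
  is_partition Q X -> uniq Xs -> (forall x, X x <-> x \in Xs) ->
  (forall a b, r a b || r b a) -> transitive r ->
  (forall a b, r a b -> r b a -> a = b) ->
  #|` Q| = count (bext r Q) Xs.
Proof.
move=> HQ uX XX tot tr anti.
pose q x (B : {fset int}) := (x \in B) && all (r x) B.
have E1 : forall x, (bext r Q x : nat) = count (q x) Q.
  move=> x; symmetry; apply: count_has_uniq; first exact: fset_uniq.
  by move=> B C BQ CQ /andP[xB _] /andP[xC _]; exact: (blk_uniq HQ BQ CQ xB xC).
rewrite count_sum; under eq_bigr do rewrite E1 count_sum.
rewrite exchange_big /= card_fset_sum1; apply: eq_big_seq => B BQ.
rewrite -count_sum count_has_uniq //; last first.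
  move=> a b _ _ /andP[aB /allP ra] /andP[bB /allP rb].
  by apply: anti; [apply: ra | apply: rb].
have : (B : seq int) != [::].
  case: HQ => H _ _; have /fset0Pn [k kB] := H _ BQ.
  by apply/eqP => e; move: kB; rewrite -[k \in B]/(k \in (B : seq int)) e.
move/(ext_exists tot tr) => [m mB am].
rewrite (_ : has _ _ = true) //; apply/hasP; exists m; last by rewrite /q mB.
by apply/XX; apply: (blk_sub HQ) BQ mB.
Qed.

Lemma arc_U1 (A : spart) (C : {fset int}) a b :
  is_arc (A `|` [fset C]) a b <-> is_arc A a b \/ arcB C a b.
Proof.
split.
  case=> D; rewrite in_fsetU in_fset1 => /orP[DA|/eqP->] H; last by right.
  by left; exists D.
case=> [[D DA H]|H]; first by exists D => //; rewrite in_fsetU DA.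
by exists C => //; rewrite in_fsetU in_fset1 eqxx orbT.
Qed.

Lemma arc_D1 (A : spart) (B0 : {fset int}) a b :
  B0 \in A \/ B0 = fset0 ->
  is_arc A a b <-> is_arc (A `\ B0) a b \/ arcB B0 a b.
Proof.
move=> hB; split.
  case=> D DA H; case: (eqVneq D B0) => [e|ne]; first by right; rewrite -e.
  by left; exists D => //; rewrite in_fsetD1 ne DA.
case=> [[D] |H]; first by rewrite in_fsetD1 => /andP[_ DA] H; exists D.
case: hB => [BA|e]; first by exists B0.
by move: H; rewrite e => -[]; rewrite in_fset0.
Qed.

Lemma arcB_U1 (B0 : {fset int}) m a b :
  (forall k, k \in B0 -> m < k) ->
  arcB (m |` B0) a b <->
  (a = m /\ (b \in B0 /\ forall k, k \in B0 -> b <= k)) \/ arcB B0 a b.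
Proof.
move=> Hm; split.
  case; rewrite !in_fset1U => /orP[/eqP am|aB] /orP[/eqP bm|bB] ab H.
  - by move: ab; rewrite am bm ltxx.
  - left; split=> //; split=> // k kB; apply: H; first by rewrite in_fset1U kB orbT.
    by rewrite am; apply: Hm.
  - by move: ab; rewrite bm => /(lt_trans (Hm _ aB)); rewrite ltxx.
  - right; split=> // k kB ak; apply: H => //; by rewrite in_fset1U kB orbT.
case=> [[-> [bB H]]|[aB bB ab H]].
  split; rewrite ?in_fset1U ?eqxx ?bB ?orbT ?Hm //.
  move=> k; rewrite in_fset1U => /orP[/eqP->|kB _]; first by rewrite ltxx.
  exact: H.
split; rewrite ?in_fset1U ?aB ?bB ?orbT //.
move=> k; rewrite in_fset1U => /orP[/eqP->|kB ak]; last exact: H.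
by move/(lt_trans (Hm _ aB)); rewrite ltxx.
Qed.

Lemma build_step (s : seq int) m (P' : spart) (B0 : {fset int}) (R : rel int) :
  all (fun x => m < x) s -> is_partition P' (fun x => x \in s) ->
  B0 \in P' \/ B0 = fset0 ->
  (forall b, R m b <-> (b \in B0 /\ forall k, k \in B0 -> b <= k)) ->
  (forall i j, is_arc P' i j <-> R i j && (i != m)) ->
  is_partition ((P' `\ B0) `|` [fset m |` B0]) (fun x => x \in m :: s) /\
  forall i j, is_arc ((P' `\ B0) `|` [fset m |` B0]) i j <-> R i j.
Proof.
move=> /allP ms HP hB HR HA.
have B0s : forall k, k \in B0 -> k \in s.
  move=> k kB; case: hB => [BP|e]; first exact: (blk_sub HP BP kB).
  by move: kB; rewrite e in_fset0.
have mB0 : forall k, k \in B0 -> m < k by move=> k /B0s; apply: ms.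
have mns : m \notin s by apply/negP => /ms; rewrite ltxx.
split.
  case: HP => Hne Hd Hc; split.
  - move=> C; rewrite in_fsetU in_fset1 => /orP[|/eqP->].
      by rewrite in_fsetD1 => /andP[_]; apply: Hne.
    by apply/fset0Pn; exists m; rewrite in_fset1U eqxx.
  - have key : forall C, C \in P' `\ B0 -> [disjoint C & m |` B0].
      move=> C; rewrite in_fsetD1 => /andP[CB CP]; apply/fdisjointP => x xC.
      rewrite in_fset1U negb_or; apply/andP; split.
        apply/eqP => e; have xs : x \in s by apply/Hc; exists C.
        by move: mns; rewrite -e xs.
      case: hB => [BP|->]; last by rewrite in_fset0.
      by move/fdisjointP: (Hd _ _ CP BP CB); apply.
    move=> C D; rewrite !in_fsetU !in_fset1.
    move=> /orP[CP|/eqP->] /orP[DP|/eqP->] CD.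
    + by move: CP DP; rewrite !in_fsetD1 => /andP[_ CP] /andP[_ DP]; apply: Hd.
    + exact: key.
    + by rewrite fdisjoint_sym; apply: key.
    + by move: CD; rewrite eqxx.
  - move=> x; split.
      rewrite inE => /orP[/eqP->|xs].
        by exists (m |` B0); [rewrite in_fsetU in_fset1 eqxx orbT | rewrite in_fset1U eqxx].
      have [C CP xC] : exists2 B, B \in P' & x \in B by apply/Hc.
      case: (eqVneq C B0) => [e|ne].
        by exists (m |` B0); [rewrite in_fsetU in_fset1 eqxx orbT | rewrite in_fset1U -e xC orbT].
      by exists C; rewrite // in_fsetU in_fsetD1 ne CP.
    case=> C; rewrite in_fsetU in_fset1 => /orP[|/eqP->].
      rewrite in_fsetD1 => /andP[_ CP] xC; rewrite inE; apply/orP; right.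
      by apply/Hc; exists C.
    by rewrite in_fset1U inE => /orP[->//|/B0s ->]; rewrite orbT.
move=> i j; rewrite arc_U1 arcB_U1 //.
have := arc_D1 i j hB; rewrite HA => E.
split.
  case=> [h|[[-> h]|h]].
  - by have /E/andP[] : is_arc (P' `\ B0) i j \/ arcB B0 i j by left.
  - by apply/HR.
  - by have /E/andP[] : is_arc (P' `\ B0) i j \/ arcB B0 i j by right.
move=> Rij; case: (eqVneq i m) => [e|ne].
  by right; left; split=> //; apply/HR; rewrite -e.
have : R i j && (i != m) by rewrite Rij ne.
by move/E => [h|h]; [left|right; right].
Qed.

Lemma build (s : seq int) : sorted <%R s -> forall R : rel int,
  (forall i j, R i j -> [/\ i \in s, j \in s & i < j]) ->
  (forall i j j', R i j -> R i j' -> j = j') ->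
  (forall i i' j, R i j -> R i' j -> i = i') ->
  exists2 P : spart, is_partition P (fun x => x \in s) &
    forall i j, is_arc P i j <-> R i j.
Proof.
elim: s => [|m s IH] srt R HR Hf Hi.
  exists fset0.
    split=> [B|B C|x]; rewrite ?in_fset0 //.
    by split=> //; case=> B; rewrite in_fset0.
  move=> i j; split; first by case=> B; rewrite in_fset0.
  by case/HR.
have ms : all (fun x => m < x) s by apply: order_path_min srt; apply: lt_trans.
have srt' : sorted <%R s by apply: path_sorted srt.
pose R' i j := R i j && (i != m).
have HR' : forall i j, R' i j -> [/\ i \in s, j \in s & i < j].
  move=> i j /andP[/HR[ii jj ij] nim]; move: ii jj.
  rewrite !inE (negbTE nim) /= => iis /orP[/eqP jm|js]; last by split.
  by move: (allP ms i iis); rewrite -jm => /(lt_trans ij); rewrite ltxx.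
have [P' HP' HA'] := IH srt' R' HR'
  (fun i j j' h h' => Hf i j j' (andP h).1 (andP h').1)
  (fun i i' j h h' => Hi i i' j (andP h).1 (andP h').1).
case: (boolP (has (R m) s)) => [/hasP[j0 j0s Rj0]|hn].
  have [B0 B0P j0B] := blk_ex HP' j0s.
  have j0min : forall k, k \in B0 -> j0 <= k.
    move=> k kB; case: (leP j0 k) => // kj.
    have : has (fun k => k < j0) B0 by apply/hasP; exists k.
    move/(in_iff HP' B0P j0B) => [i /HA' /andP[Rij ne]].
    by move: ne; rewrite (Hi _ _ _ Rij Rj0) eqxx.
  have HB : forall b, R m b <-> (b \in B0 /\ forall k, k \in B0 -> b <= k).
    move=> b; split.
      by move=> Rb; rewrite -(Hf _ _ _ Rj0 Rb).
    case=> bB bmin.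
    by have -> : b = j0 by apply/le_anti; rewrite bmin ?j0min.
  have [H1 H2] := @build_step s m P' B0 R ms HP' (or_introl B0P) HB HA'.
  by exists ((P' `\ B0) `|` [fset m |` B0]).
have HB : forall b, R m b <-> (b \in fset0 /\ forall k, k \in fset0 -> b <= k).
  move=> b; split; last by case; rewrite in_fset0.
  move=> Rb; case: (HR _ _ Rb); rewrite !inE => _ /orP[/eqP e|bs] mb.
    by move: mb; rewrite e ltxx.
  by move: hn; rewrite (_ : has (R m) s = true) //; apply/hasP; exists b.
have [H1 H2] := @build_step s m P' fset0 R ms HP' (or_intror erefl) HB HA'.
by exists ((P' `\ fset0) `|` [fset m |` fset0]).
Qed.

Fixpoint seg (a : int) (m : nat) : seq int :=
  if m is m'.+1 then a :: seg (a + 1) m' else [:: a].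

Lemma mem_seg a m x : (x \in seg a m) = (a <= x) && (x <= a + m%:Z).
Proof.
elim: m a => [|m IH] a /=; rewrite inE; first by lia.
by rewrite IH; lia.
Qed.

Lemma size_seg a m : size (seg a m) = m.+1.
Proof. by elim: m a => [|m IH] a //=; rewrite IH. Qed.

Lemma path_seg a b m : a < b -> path <%R a (seg b m).
Proof.
elim: m a b => [|m IH] a b ab /=; first by rewrite ab.
by rewrite ab /=; apply: IH; lia.
Qed.

Lemma seg_count (f g h : pred int) a m :
  (forall x, a <= x -> x < a + m%:Z -> f x = g (x + 1)) ->
  f (a + m%:Z) = h (a + m%:Z) ->
  (count f (seg a m) + g a = count g (seg a m) + h (a + m%:Z)%R)%N.
Proof.
elim: m a => [|m IH] a Hfg Hfh /=.
  by move: Hfh; rewrite addr0 => ->; rewrite addn0 addn0 addnC.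
have e : a + 1 + m%:Z = a + m.+1%:Z by lia.
have := IH (a + 1); rewrite e => /(_ _ Hfh) IH'.
have {}IH' := IH' (fun x h1 h2 => Hfg x ltac:(lia) ltac:(lia)).
have fa : f a = g (a + 1) by apply: Hfg; lia.
rewrite fa [(g (a + 1)%R + _)%N]addnC IH' [LHS]addnC addnA.
by [].
Qed.

Lemma path_seg2 c a m b k : c < a -> a + m%:Z < b -> path <%R c (seg a m ++ seg b k).
Proof.
elim: m a c => [|m IH] a c ca amb /=.
  by rewrite ca /=; apply: path_seg; lia.
by rewrite ca /=; apply: IH; lia.
Qed.

Lemma sorted_seg2 a m b k : a + m%:Z < b -> sorted <%R (seg a m ++ seg b k).
Proof.
case: m => [|m] amb /=; first by apply: path_seg; lia.
by apply: path_seg2; lia.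
Qed.

Section Arith.
Variable n : nat.
Lemma pm_m1 : in_pm n.+1 (-1). Proof. rewrite /in_pm; lia. Qed.
Lemma pm_1 : in_pm n.+1 1. Proof. rewrite /in_pm; lia. Qed.
Lemma pm_lo : in_pm n.+1 (- n.+1%:Z). Proof. rewrite /in_pm; lia. Qed.
Lemma pm_hi : in_pm n.+1 (1 + n%:Z). Proof. rewrite /in_pm; lia. Qed.
Lemma pm_0 : ~~ in_pm n.+1 (-1 + 1). Proof. rewrite /in_pm; lia. Qed.
Lemma pm_hi1 : ~~ in_pm n.+1 (1 + n%:Z + 1). Proof. rewrite /in_pm; lia. Qed.
Lemma pm_A1 x : - n.+1%:Z <= x -> x < -1 -> in_pm n.+1 x /\ in_pm n.+1 (x + 1).
Proof. rewrite /in_pm; split; lia. Qed.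
Lemma pm_A2 x : 1 <= x -> x < 1 + n%:Z -> in_pm n.+1 x /\ in_pm n.+1 (x + 1).
Proof. rewrite /in_pm; split; lia. Qed.
Lemma pm_lo' k : in_pm n.+1 k -> - n.+1%:Z <= k. Proof. rewrite /in_pm; lia. Qed.
Lemma pm_hi' k : in_pm n.+1 k -> k <= 1 + n%:Z. Proof. rewrite /in_pm; lia. Qed.
Lemma pm_e1 : - n.+1%:Z + n%:Z = -1. Proof. lia. Qed.
Lemma fin_arith (p1 p2 q1 q2 l : nat) (b : bool) :
  (p1 = q1 + b)%N -> (p2 + ~~ b = q2 + 1)%N -> (q1 + q2 + l = n.+1 + n.+1)%N ->
  (b -> (p1 + p2)%:Z = (2 * n.+1 + 2)%:Z - l%:Z) /\
  (~~ b -> (p1 + p2)%:Z = (2 * n.+1)%:Z - l%:Z).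
Proof. case: b => /=; split=> //; lia. Qed.
End Arith.

Definition arcb (L : spart) (i j : int) : bool :=
  has (fun B : {fset int} => [&& i \in B, j \in B, i < j &
         all (fun k => (i < k) ==> (j <= k)) B]) L.

Lemma arcbP L i j : is_arc L i j <-> arcb L i j.
Proof.
split.
  case=> B BL [iB jB ij H]; apply/hasP; exists B => //; rewrite iB jB ij /=.
  by apply/allP => k kB; apply/implyP; apply: H.
case/hasP => B BL /and4P[iB jB ij /allP H]; exists B => //; split=> // k kB ik.
by move/implyP: (H k kB); apply.
Qed.

Lemma part_ext P (X Y : int -> bool) :
  (forall x, X x <-> Y x) -> is_partition P X -> is_partition P Y.
Proof. by move=> E [h1 h2 h3]; split=> // x; rewrite -E. Qed.

Unset Implicit Arguments.
Local Open Scope fset_scope.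
Theorem corollary5p2 (n : nat) (L : spart) :
  (1 <= n)%N -> in_NCDt n L ->
  (exists2 P : spart, is_partition P (in_pm n) &
     forall i j, is_arc P i j <-> plus_arc (in_pm n) L i j) /\
  (forall P : spart, is_partition P (in_pm n) ->
     (forall i j, is_arc P i j <-> plus_arc (in_pm n) L i j) ->
     (is_block_max L (-1) -> #|` P|%:Z = ((2 * n + 2)%:Z - #|` L|%:Z)%R) /\
     (~ is_block_max L (-1) -> #|` P|%:Z = ((2 * n)%:Z - #|` L|%:Z)%R)).
Proof.
Local Open Scope ring_scope.
case: n => [//|n'] _ [[HL Hsym] HNC].
pose X := in_pm n'.+1.
pose Xs := seg (- n'.+1%:Z) n' ++ seg 1 n'.
have XX : forall x, X x <-> x \in Xs.
  by move=> x; rewrite /X /in_pm mem_cat !mem_seg; split; lia.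
have sXs : sorted <%R Xs by apply: sorted_seg2; lia.
have uXs : uniq Xs by apply: sorted_uniq sXs; [apply: lt_trans | apply: ltxx].
pose mxL := bext rmax L. pose mnL := bext rmin L.
have NCk : forall x j i, is_arc L x j -> is_arc L i (x + 1) -> is_arc L x (x + 1).
  move=> x j i Hxj Hix.
  have xj : x < j by case: Hxj => B _ [].
  have ix : i < x + 1 by case: Hix => B _ [].
  case: (eqVneq j (x + 1)) => [<-//|nj].
  case: (eqVneq i x) => [ei|ni]; first by move: Hix; rewrite ei.
  have := HNC i x (x + 1) j Hix Hxj ltac:(lia) ltac:(lia) ltac:(lia).
  case=> _ e; lia.
have Xb : forall x, X x -> (- n'.+1%:Z <= x) && (x <= n'.+1%:Z).
  by move=> x; rewrite /X /in_pm; lia.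
pose Rb i j := (arcb L i j && (j != i + 1)) || [&& j == i + 1, X i, X j, mxL i & mnL j].
have PR : forall i j, plus_arc X L i j <-> Rb i j.
  move=> i j; split.
    case=> [[/arcbP a ne]|[-> Xi Xj /bmaxP m1 /bminP m2]]; apply/orP.
      by left; rewrite a; apply/eqP.
    by right; apply/and5P; split.
  case/orP => [/andP[/arcbP a /eqP ne]|/and5P[/eqP -> Xi Xj m1 m2]].
    by left.
  by right; split=> //; [apply/bmaxP | apply/bminP].
split.
  have H1 : forall i j, Rb i j -> [/\ i \in Xs, j \in Xs & i < j].
    move=> i j /PR [[a _]|[-> Xi Xj _ _]].
      have [Xi Xj] := arc_X HL a.
      have ij : i < j by case: a => B _ [].
      by split=> //; apply/XX.
    by split; rewrite -?XX //; lia.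
  have H2 : forall i j j', Rb i j -> Rb i j' -> j = j'.
    move=> i j j' /PR h /PR h'.
    case: h => [[a ne]|[e Xi Xj /bmaxP m1 m2]];
      case: h' => [[a' ne']|[e' Xi' Xj' /bmaxP m1' m2']].
    - exact: (arc_fun HL a a').
    - have := (out_bmax HL Xi').1 (ex_intro _ j a); by rewrite m1'.
    - have := (out_bmax HL Xi).1 (ex_intro _ j' a'); by rewrite m1.
    - by rewrite e e'.
  have H3 : forall i i' j, Rb i j -> Rb i' j -> i = i'.
    move=> i i' j /PR h /PR h'.
    case: h => [[a ne]|[e Xi Xj m1 /bminP m2]];
      case: h' => [[a' ne']|[e' Xi' Xj' m1' /bminP m2']].
    - exact: (arc_inj HL a a').
    - have := (in_bmin HL Xj').1 (ex_intro _ i a); by rewrite m2'.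
    - have := (in_bmin HL Xj).1 (ex_intro _ i' a'); by rewrite m2.
    - by move: e'; rewrite e; lia.
  have [P0 HP0 HA0] := build sXs H1 H2 H3.
  exists P0; first by apply: part_ext HP0 => x; rewrite XX.
  by move=> i j; rewrite HA0 PR.
move=> P HP HA.
have cP : #|` P| = count (bext rmax P) Xs.
  apply: (card_bext (r:=rmax) HP uXs XX).
  - by move=> a b; rewrite /rmax orbC le_total.
  - by move=> y x z /= h1 h2; exact: le_trans h2 h1.
  - by move=> a b h1 h2; apply/le_anti; apply/andP; split.
have cL : #|` L| = count mnL Xs.
  apply: (card_bext (r:=rmin) HL uXs XX).
  - by move=> a b; rewrite /rmin le_total.
  - by move=> y x z /= h1 h2; exact: le_trans h1 h2.
  - by move=> a b h1 h2; apply/le_anti; apply/andP; split.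
pose mxP := bext rmax P.
have PA : forall x, (exists j, is_arc P x j) <-> exists j, plus_arc X L x j.
  by move=> x; split=> -[j h]; exists j; apply/HA.
have ptA : forall x, X x -> X (x + 1) -> mxP x = ~~ mnL (x + 1).
  move=> x Xx Xx1; apply/idP/idP => h.
    apply/negP => hm.
    have : exists j, plus_arc X L x j.
      case: (boolP (mxL x)) => hx.
        by exists (x + 1); right; split=> //; [apply/bmaxP | apply/bminP].
      have [j a] := (out_bmax HL Xx).2 hx.
      exists j; left; split=> // e.
      have : exists i, is_arc L i (x + 1) by exists x; rewrite -e.
      by move/(in_bmin HL Xx1)/negP; apply.
    by move/PA/(out_bmax HP Xx)/negP; apply.
  apply/negPn/negP => hP.
  have [j pj] := (PA x).1 ((out_bmax HP Xx).2 hP).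
  have [i ai] := (in_bmin HL Xx1).2 h.
  case: pj => [[a ne]|[e _ _ _ /bminP m2]].
    by apply: ne; exact: (arc_fun HL a (NCk _ _ _ a ai)).
  by move/negP: h; apply; rewrite -e.
have ptB : forall x, X x -> ~~ X (x + 1) -> mxP x = mxL x.
  move=> x Xx nX; apply: negb_inj; apply/idP/idP => h.
    have [j pj] := (PA x).1 ((out_bmax HP Xx).2 h).
    case: pj => [[a ne]|[e _ Xj _ _]].
      by apply/(out_bmax HL Xx); exists j.
    by case/negP: nX; rewrite -e.
  have [j a] := (out_bmax HL Xx).2 h.
  apply/(out_bmax HP Xx)/PA; exists j; left; split=> // e.
  by case/negP: nX; rewrite -e; exact: (arc_X HL a).2.
pose g := fun y => ~~ mnL y.
have E1 := @seg_count mxP g mxL (- n'.+1%:Z) n'.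
rewrite pm_e1 in E1.
have hA1 : forall x, - n'.+1%:Z <= x -> x < -1 -> mxP x = g (x + 1).
  by move=> x h1 h2; have [] := pm_A1 h1 h2; apply: ptA.
have hB1 : mxP (-1) = mxL (-1) by apply: ptB; [exact: pm_m1 | exact: pm_0].
have {}E1 := E1 hA1 hB1.
have E2 := @seg_count mxP g mxL 1 n'.
have hA2 : forall x, 1 <= x -> x < 1 + n'%:Z -> mxP x = g (x + 1).
  by move=> x h1 h2; have [] := pm_A2 h1 h2; apply: ptA.
have hB2 : mxP (1 + n'%:Z) = mxL (1 + n'%:Z).
  by apply: ptB; [exact: pm_hi | exact: pm_hi1].
have {}E2 := E2 hA2 hB2.
have mnn : mnL (- n'.+1%:Z).
  have [B BL aB] := blk_ex HL (pm_lo n').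
  rewrite /mnL (bext_blk HL _ BL aB); apply/allP => k kB.
  exact: (pm_lo' (blk_sub HL BL kB)).
have mxn : mxL (1 + n'%:Z).
  have [B BL aB] := blk_ex HL (pm_hi n').
  rewrite /mxL (bext_blk HL _ BL aB); apply/allP => k kB.
  exact: (pm_hi' (blk_sub HL BL kB)).
have sym : mnL 1 = mxL (-1).
  have X1 : X 1 := pm_1 n'.
  have Xm1 : X (-1) := pm_m1 n'.
  apply: negb_inj; apply/idP/idP => h.
    have [i a] := (in_bmin HL X1).2 h.
    apply/(out_bmax HL Xm1); exists (- i); exact: ((Hsym i 1).1 a).
  have [j a] := (out_bmax HL Xm1).2 h.
  apply/(in_bmin HL X1); exists (- j); move/Hsym: a; by rewrite opprK.
have cg : (count g Xs + count mnL Xs = size Xs)%N by rewrite addnC; exact: count_predC.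
rewrite size_cat !size_seg /Xs !count_cat in cg.
move: E1 E2; rewrite /g mnn mxn sym /= addn0 => E1 E2.
rewrite cP cL /Xs !count_cat.
have [F1 F2] := fin_arith E1 E2 cg.
split.
  by move/bmaxP => hm; apply: F1.
by move=> hm; apply: F2; apply/negP => /bmaxP.
Qed.
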